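(* Let $\rho_{ab}$ be a two-qubit state (density matrix on $\mathbb{C}^2\otimes\mathbb{C}^2$), with entries $\rho_{ij}$ in the product computational basis $\{|00\rangle,|01\rangle,|10\rangle,|11\rangle\}$ indexed by $i,j\in\{1,2,3,4\}$. Suppose one can choose arguments $\theta_{ij}\in[0,2\pi]$ of the entries ($\rho_{ij}=|\rho_{ij}|e^{\mathfrak{i}\theta_{ij}}$, arbitrary when $\rho_{ij}=0$) such that for all $i,k,j$ there is an integer $n$ with $\theta_{ik}+\theta_{kj}=2n\pi+\theta_{ij}$. Let $\rho_a=\mathrm{Tr}_b\rho_{ab}$ and $\rho_b=\mathrm{Tr}_a\rho_{ab}$. Then $$F_c(\rho_a)+F_c(\rho_b)\le 2F_c(\rho_{ab})+\frac12.$$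
   Context: Coherence is taken with respect to the computational (product) basis. For a single qubit, the maximally coherent states are $\mathcal{M}=\{\frac{1}{\sqrt2}(e^{\mathfrak{i}\theta_0}|0\rangle+e^{\mathfrak{i}\theta_1}|1\rangle):\theta_0,\theta_1\in[0,2\pi]\}$ and $F_c(\sigma)=\max_{|\phi\rangle\in\mathcal{M}}\langle\phi|\sigma|\phi\rangle$. For two qubits, the bipartite maximally coherent states are $\mathcal{M}_2=\{\frac12\sum_{k,l=0}^{1}e^{\mathfrak{i}\theta_{kl}}|kl\rangle:\theta_{kl}\in[0,2\pi]\}$ and the (global) coherence fraction is $F_c(\rho_{ab})=\max_{|\phi\rangle\in\mathcal{M}_2}\langle\phi|\rho_{ab}|\phi\rangle$. *)

(* Defs.v *)
From HB Require Import structures.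
From mathcomp Require Import all_boot all_order all_algebra.
From mathcomp Require Import all_classical all_reals all_analysis.
From mathcomp Require Import complex.
Set Implicit Arguments. Unset Strict Implicit. Unset Printing Implicit Defensive.
Import Order.TTheory GRing.Theory Num.Theory.
Local Open Scope ring_scope.
Local Open Scope classical_set_scope.

Definition expi (R : realType) (t : R) : R[i] := (cos t +i* sin t)%C.

Definition adj (R : realType) m n (A : 'M[R[i]]_(m, n)) : 'M[R[i]]_(n, m) :=
  \matrix_(i, j) (A j i)^*.

Definition density (R : realType) n (rho : 'M[R[i]]_n) : Prop :=
  adj rho = rho /\
  (forall v : 'cV[R[i]]_n, 0 <= (adj v *m rho *m v) ord0 ord0) /\
  \tr rho = 1.

(* product computational basis: |kl> has index 2k+l in 'I_4,
   i.e. |00>,|01>,|10>,|11> = 0,1,2,3 (the paper's 1,2,3,4) *)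
Definition idx2 (k l : 'I_2) : 'I_4 := inord (2 * k + l).

Definition ptrace_b (R : realType) (rho : 'M[R[i]]_4) : 'M[R[i]]_2 :=
  \matrix_(k, k') \sum_(l < 2) rho (idx2 k l) (idx2 k' l).
Definition ptrace_a (R : realType) (rho : 'M[R[i]]_4) : 'M[R[i]]_2 :=
  \matrix_(l, l') \sum_(k < 2) rho (idx2 k l) (idx2 k l').

(* <phi|sigma|phi> for |phi> = (1/sqrt n) sum_k e^{i th_k} |k> *)
Definition coh_val (R : realType) n (sigma : 'M[R[i]]_n) (th : 'I_n -> R) : R[i] :=
  (n%:R)^-1 * \sum_(k < n) \sum_(k' < n) (expi (th k))^* * sigma k k' * expi (th k').

(* coherence fraction: max over maximally coherent states, phases in [0,2pi]
   (the value is real for Hermitian sigma; we take the real part). The set is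
   compact so sup = max. *)
Definition Fc (R : realType) n (sigma : 'M[R[i]]_n) : R :=
  sup [set x : R | exists th : 'I_n -> R,
         (forall k, 0 <= th k <= 2 * pi) /\ x = complex.Re (coh_val sigma th)].

(* Main.v *)
Require Import Defs.
From HB Require Import structures.
From mathcomp Require Import all_boot all_order all_algebra.
From mathcomp Require Import all_classical all_reals all_analysis.
From mathcomp Require Import complex.
From mathcomp Require Import ring lra.
Import Order.TTheory GRing.Theory Num.Theory.
Local Open Scope ring_scope.

Section H.
Variable R : realType.

Local Notation N z := (complex.Re `|z|).

Lemma ReD (x y : R[i]) : complex.Re (x + y) = complex.Re x + complex.Re y.
Proof. by case: x; case: y. Qed.

Lemma ReSum n (F : 'I_n -> R[i]) : complex.Re (\sum_(k < n) F k) = \sum_(k < n) complex.Re (F k).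
Proof. exact: (big_morph _ ReD). Qed.

Lemma ReMC (x : R) (z : R[i]) : complex.Re (x%:C%C * z) = x * complex.Re z.
Proof. case: z => a b /=; rewrite mul0r subr0. done. Qed.

Lemma Re_le_N (z : R[i]) : complex.Re z <= N z.
Proof.
rewrite normc_def /=; case: z => a b /=.
apply: (le_trans (ler_norm a)); rewrite -sqrtr_sqr; apply: ler_wsqrtr.
by rewrite lerDl sqr_ge0.
Qed.

Lemma N_ge0 (z : R[i]) : 0 <= N z.
Proof. by rewrite normc_def /= sqrtr_ge0. Qed.

Lemma ND (z w : R[i]) : N (z + w) <= N z + N w.
Proof.
have := ler_normD z w; rewrite lecE => /andP[_]; by rewrite ReD.
Qed.

Lemma NM (z w : R[i]) : N (z * w) = N z * N w.
Proof. by rewrite normrM !normc_def /= !mulr0 subr0. Qed.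

Lemma Nexpi (t : R) : N (expi t) = 1.
Proof. by rewrite normc_def /= cos2Dsin2 sqrtr1. Qed.

Lemma Nconj (z : R[i]) : N (z^*)%C = N z.
Proof. by case: z => a b; rewrite !normc_def /= sqrrN. Qed.

Lemma NN (z : R[i]) : N (`|z|) = N z.
Proof. by rewrite normr_id. Qed.

Lemma expiD (a b : R) : expi a * expi b = expi (a + b).
Proof. by rewrite /expi cosD sinD /=; congr (_ +i* _)%C; rewrite addrC. Qed.

Lemma expiJ (a : R) : (expi a)^* = expi (- a).
Proof. by rewrite /expi /= cosN sinN. Qed.

Lemma expiJK (a : R) : (expi a)^* * expi a = 1.
Proof. by rewrite expiJ expiD addNr /expi cos0 sin0. Qed.

Lemma trig_per (f : R -> R) (n : int) (b : R) : periodic f (pi *+ 2) ->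
  f (2 * n%:~R * pi + b) = f b.
Proof.
move=> hf; case: n => m.
  have -> : 2 * (Posz m)%:~R * pi = ((pi *+ 2) *+ m : R).
    by rewrite pmulrn; ring.
  by rewrite addrC (periodicn hf).
have -> : 2 * (Negz m)%:~R * pi = (- ((pi *+ 2) *+ m.+1) : R).
  by rewrite NegzE mulrNz pmulrn; ring.
by rewrite -(periodicn hf m.+1 (- _ + b)) [- _ + b]addrC addrNK.
Qed.

Lemma expi_per (n : int) (b : R) : expi (2 * n%:~R * pi + b) = expi b.
Proof. by rewrite /expi (trig_per _ _ _ (@cosD2pi R)) (trig_per _ _ _ (@sinD2pi R)). Qed.

Lemma invn_C n : ((n%:R : R[i])^-1) = ((n%:R : R)^-1)%:C%C.
Proof. by rewrite -(rmorph_nat (real_complex R)) -fmorphV. Qed.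

Lemma coh_ub n (s : 'M[R[i]]_n) th :
  complex.Re (coh_val s th) <= (n%:R)^-1 * \sum_(k < n) \sum_(k' < n) N (s k k').
Proof.
rewrite /coh_val invn_C ReMC ler_wpM2l ?invr_ge0 ?ler0n //.
rewrite ReSum; apply: ler_sum => k _; rewrite ReSum; apply: ler_sum => k' _.
apply: (le_trans (Re_le_N _)).
by rewrite !NM Nconj !Nexpi mul1r mulr1.
Qed.

Lemma diag_term (a : R) (z : R[i]) : (expi a)^* * z * expi a = z.
Proof. by rewrite mulrAC expiJK mul1r. Qed.

Lemma coh2 (s : 'M[R[i]]_2) th :
  complex.Re (coh_val s th) <=
  2^-1 * (complex.Re (s (inord 0) (inord 0) + s (inord 1) (inord 1)) + N (s (inord 0) (inord 1)) + N (s (inord 1) (inord 0))).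
Proof.
rewrite /coh_val invn_C ReMC ler_wpM2l ?invr_ge0 ?ler0n //.
rewrite !big_ord_recr !big_ord0 /= !add0r.
have -> : widen_ord (leqnSn 1) ord_max = inord 0 :> 'I_2 by apply/val_inj; rewrite /= inordK.
have -> : (ord_max : 'I_2) = inord 1 by apply/val_inj; rewrite /= inordK.
rewrite !diag_term !ReD.
have h1 := Re_le_N ((expi (th (inord 0)))^* * s (inord 0) (inord 1) * expi (th (inord 1))).
have h2 := Re_le_N ((expi (th (inord 1)))^* * s (inord 1) (inord 0) * expi (th (inord 0))).
rewrite !NM Nconj !Nexpi mul1r mulr1 in h1.
rewrite !NM Nconj !Nexpi mul1r mulr1 in h2.
move: h1 h2 => /= h1 h2. lra.
Qed.

Lemma sum4 (F : 'I_4 -> R) :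
  \sum_(i < 4) F i = F (inord 0) + F (inord 1) + F (inord 2) + F (inord 3).
Proof.
rewrite !big_ord_recr big_ord0 /= add0r.
by congr (_ + _ + _ + _); congr F; apply/val_inj; rewrite /= inordK.
Qed.

Lemma sum4C (F : 'I_4 -> R[i]) :
  \sum_(i < 4) F i = F (inord 0) + F (inord 1) + F (inord 2) + F (inord 3).
Proof.
rewrite !big_ord_recr big_ord0 /= add0r.
by congr (_ + _ + _ + _); congr F; apply/val_inj; rewrite /= inordK.
Qed.

Lemma sum2C (F : 'I_2 -> R[i]) :
  \sum_(i < 2) F i = F (inord 0) + F (inord 1).
Proof.
rewrite !big_ord_recr big_ord0 /= add0r.
by congr (_ + _); congr F; apply/val_inj; rewrite /= inordK.
Qed.

Lemma idx2E a b : (a < 2)%N -> (b < 2)%N -> idx2 (inord a) (inord b) = inord (2 * a + b).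
Proof. by move=> ha hb; rewrite /idx2 !inordK. Qed.

Lemma i00 : idx2 (inord 0) (inord 0) = inord 0. Proof. by rewrite idx2E. Qed.
Lemma i01 : idx2 (inord 0) (inord 1) = inord 1. Proof. by rewrite idx2E. Qed.
Lemma i10 : idx2 (inord 1) (inord 0) = inord 2. Proof. by rewrite idx2E. Qed.
Lemma i11 : idx2 (inord 1) (inord 1) = inord 3. Proof. by rewrite idx2E. Qed.

End H.

Local Notation N z := (complex.Re `|z|).

Theorem theorem5 (R : realType) (rho : 'M[R[i]]_4) :
  density rho ->
  (exists theta : 'I_4 -> 'I_4 -> R,
     (forall i j, 0 <= theta i j <= 2 * pi) /\
     (forall i j, rho i j = `|rho i j| * expi (theta i j)) /\
     (forall i k j, exists n : int,
        theta i k + theta k j = 2 * n%:~R * pi + theta i j)) ->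
  Fc (ptrace_b rho) + Fc (ptrace_a rho) <= 2 * Fc rho + 2^-1.
Proof.
move=> [_ [_ htr]] [theta [hr [hrho hcomp]]].
set W := (4%:R : R)^-1 * \sum_(k < 4) \sum_(k' < 4) N (rho k k').
have hW : W <= Fc rho.
  apply: ub_le_sup.
    exists W => x [th [_ ->]]; exact: coh_ub.
  exists (fun k => theta k 0); split; first by move=> k; exact: hr.
  rewrite /coh_val invn_C ReMC; congr (_ * _); rewrite ReSum; apply: eq_bigr => k _.
  rewrite ReSum; apply: eq_bigr => k' _.
  have [n hn] := hcomp k k' 0.
  apply/esym; rewrite {1}hrho -!mulrA expiD hn expi_per mulrCA expiJK mulr1 //.
have ntr : complex.Re (\tr rho) = 1 by rewrite htr.
rewrite /mxtrace sum4C !ReD in ntr.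
have hb : Fc (ptrace_b rho) <= 2^-1 * (1 + N (rho (inord 0) (inord 2)) + N (rho (inord 1) (inord 3))
   + N (rho (inord 2) (inord 0)) + N (rho (inord 3) (inord 1))).
  apply: ge_sup.
    exists (complex.Re (coh_val (ptrace_b rho) (fun=> 0))), (fun=> 0); split => //.
    by move=> _; rewrite lexx /= mulr_ge0 ?pi_ge0.
  move=> x [th [_ ->]].
  apply: le_trans (@coh2 R _ th) _.
  rewrite !mxE !sum2C !i00 !i01 !i10 !i11 !ReD.
  have := @ND R (rho (inord 0) (inord 2)) (rho (inord 1) (inord 3)).
  have := @ND R (rho (inord 2) (inord 0)) (rho (inord 3) (inord 1)).
  lra.
have ha : Fc (ptrace_a rho) <= 2^-1 * (1 + N (rho (inord 0) (inord 1)) + N (rho (inord 2) (inord 3))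
   + N (rho (inord 1) (inord 0)) + N (rho (inord 3) (inord 2))).
  apply: ge_sup.
    exists (complex.Re (coh_val (ptrace_a rho) (fun=> 0))), (fun=> 0); split => //.
    by move=> _; rewrite lexx /= mulr_ge0 ?pi_ge0.
  move=> x [th [_ ->]]; apply: le_trans (@coh2 R _ th) _.
  rewrite !mxE !sum2C !i00 !i01 !i10 !i11 !ReD.
  have := @ND R (rho (inord 0) (inord 1)) (rho (inord 2) (inord 3)).
  have := @ND R (rho (inord 1) (inord 0)) (rho (inord 3) (inord 2)).
  lra.
move: hW; rewrite /W !sum4 => hW.
have := @Re_le_N R (rho (inord 0) (inord 0)).
have := @Re_le_N R (rho (inord 1) (inord 1)).
have := @Re_le_N R (rho (inord 2) (inord 2)).
have := @Re_le_N R (rho (inord 3) (inord 3)).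
have := @N_ge0 R (rho (inord 0) (inord 3)).
have := @N_ge0 R (rho (inord 3) (inord 0)).
have := @N_ge0 R (rho (inord 1) (inord 2)).
have := @N_ge0 R (rho (inord 2) (inord 1)).
lra.
Qed.
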